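(* Let $n\geq 2$ and $q=p^h>2$ with $p$ prime, and put $N=h(n-1)$. Let $B$ be a minimal blocking set with respect to lines in $PG(n,q)$. Suppose there are $p^N-p^{N-1}+1$ distinct points $R_i\in B$ such that every line through $R_i$ either meets $B$ only in $R_i$ or is entirely contained in $B$. Then $B$ is a hyperplane of $PG(n,q)$.
   Context: A blocking set with respect to lines is a set of points meeting every line. It is minimal if no proper subset is a blocking set. *)

(* Defs.v *)
(* Projective space PG(n,F) over a finite field F, modelled
   as the lattice of subspaces of F^(n+1) (row vectors), each subspace being
   represented by its canonical square matrix <<A>>%MS. *)
From HB Require Import structures.
From mathcomp Require Import all_boot all_order all_algebra all_field.
Set Implicit Arguments. Unset Strict Implicit. Unset Printing Implicit Defensive.
Import GRing.Theory.
Local Open Scope ring_scope.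

(* projective subspaces of (vector) dimension k of F^(n+1),
   i.e. projective dimension k-1 in PG(n,F) *)
Definition psub (F : finFieldType) (n k : nat) :=
  {A : 'M[F]_(n.+1) | (\rank A == k)%N && (<<A>>%MS == A)}.

Definition ppoint (F : finFieldType) (n : nat) := psub F n 1.
Definition pline (F : finFieldType) (n : nat) := psub F n 2.
Definition phyperplane (F : finFieldType) (n : nat) := psub F n n.

Definition pinc (F : finFieldType) (n k : nat) (P : ppoint F n) (S : psub F n k) : bool :=
  (val P <= val S)%MS.

Definition blocking (F : finFieldType) (n : nat) (B : {set ppoint F n}) : Prop :=
  forall L : pline F n, exists2 P, P \in B & pinc P L.

Definition minimal_blocking (F : finFieldType) (n : nat) (B : {set ppoint F n}) : Prop :=
  blocking B /\ forall B' : {set ppoint F n}, B' \proper B -> ~ blocking B'.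

Definition good_point (F : finFieldType) (n : nat) (B : {set ppoint F n}) (R : ppoint F n) : Prop :=
  forall L : pline F n, pinc R L ->
    (forall P, P \in B -> pinc P L -> P = R) \/ (forall P, pinc P L -> P \in B).

Definition hyperplane_points (F : finFieldType) (n : nat) (H : phyperplane F n) : {set ppoint F n} :=
  [set P | pinc P H].

(* Main.v *)
Require Import Defs.
From HB Require Import structures.
From mathcomp Require Import all_boot all_order all_algebra all_field.
From mathcomp Require Import zify.
Set Implicit Arguments. Unset Strict Implicit. Unset Printing Implicit Defensive.
Import GRing.Theory.
Local Open Scope ring_scope.

Section Helpers.
Variables (F : finFieldType) (n : nat).
Local Notation pt := (ppoint F n).

Lemma pt_rank (P : pt) : \rank (val P) = 1%N.
Proof. by case: P => A /= /andP[/eqP]. Qed.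

Lemma pt_gen (P : pt) : <<val P>>%MS = val P.
Proof. by case: P => A /= /andP[_ /eqP]. Qed.

Lemma pt_eq (P Q : pt) : (val P <= val Q)%MS -> P = Q.
Proof.
move=> le; apply: val_inj.
have := (mxrank_leqif_eq le).2; rewrite !pt_rank eqxx => /esym /genmxP.
by rewrite !pt_gen.
Qed.

Lemma mkpt_proof (v : 'rV[F]_n.+1) : v != 0 ->
  (\rank <<v>>%MS == 1%N) && (<<<<v>>>>%MS == <<v>>%MS).
Proof. by move=> nz; rewrite genmxE rank_rV nz genmx_id !eqxx. Qed.

Definition mkpt (v : 'rV[F]_n.+1) (nz : v != 0) : pt := @exist _ (fun A : 'M[F]_n.+1 => (\rank A == 1%N) && (<<A>>%MS == A)) _ (mkpt_proof nz).

Lemma mkpt_val v (nz : v != 0) : val (mkpt nz) = <<v>>%MS.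
Proof. by []. Qed.

Lemma mkpt_le v (nz : v != 0) (P : pt) : (v <= val P)%MS -> mkpt nz = P.
Proof. by move=> le; apply: pt_eq; rewrite mkpt_val genmxE. Qed.

Lemma in_mkpt v (nz : v != 0) : (v <= val (mkpt nz))%MS.
Proof. by rewrite mkpt_val genmxE. Qed.

Lemma pt_nz (P : pt) : nz_row (val P) != 0.
Proof. by rewrite nz_row_eq0 -mxrank_eq0 pt_rank. Qed.

Lemma pt_of_nz (P : pt) : mkpt (pt_nz P) = P.
Proof. by apply: mkpt_le; apply: nz_row_sub. Qed.

Lemma exists_pt m (A : 'M[F]_(m, n.+1)) : (0 < \rank A)%N -> exists P : pt, (val P <= A)%MS.
Proof.
rewrite lt0n mxrank_eq0 -nz_row_eq0 => nz.
by exists (mkpt nz); rewrite mkpt_val genmxE nz_row_sub.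
Qed.

End Helpers.
Section Count.
Variables (F : finFieldType) (n : nat).
Local Notation pt := (ppoint F n).

Lemma card_subv k m (A : 'M[F]_(m, k)) :
  #|[set v : 'rV[F]_k | (v <= A)%MS]| = (#|F| ^ \rank A)%N.
Proof.
have ->: [set v : 'rV_k | (v <= A)%MS] = [set u *m row_base A | u : 'rV_(\rank A)].
  apply/setP=> v; rewrite inE; apply/idP/imsetP.
    by rewrite -(eq_row_base A) => /submxP[u ->]; exists u.
  by case=> u _ ->; rewrite -(eq_row_base A) submxMl.
by rewrite card_imset ?card_mx ?mul1n //; apply: row_free_inj; apply: row_base_free.
Qed.

Lemma card_subv_nz k m (A : 'M[F]_(m, k)) :
  #|[set v : 'rV[F]_k | (v <= A)%MS && (v != 0)]| = (#|F| ^ \rank A - 1)%N.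
Proof.
rewrite -card_subv [in RHS](cardsD1 0) inE sub0mx add1n subSS subn0.
idtac.
by apply: eq_card => v; rewrite !inE andbC.
Qed.

Lemma count_pts (W : 'M[F]_n.+1) :
  ((#|F| ^ \rank W - 1) = #|[set P : pt | (val P <= W)%MS]| * (#|F| - 1))%N.
Proof.
set T := [set P : pt | _].
rewrite -card_subv_nz; set V := [set v : 'rV_n.+1 | _].
rewrite -sum1_card.
transitivity (\sum_(v in V) \sum_(P in T) ((v <= val P)%MS : nat))%N.
  apply: eq_bigr => v; rewrite inE => /andP[vW nz].
  have P0T : mkpt nz \in T by rewrite inE mkpt_val genmxE.
  rewrite (bigD1 _ P0T) /= (in_mkpt nz) big1 ?addn0 // => P /andP[_ neP].
  case vP: (v <= val P)%MS => //.
  by move: neP; rewrite (mkpt_le nz vP) eqxx.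
rewrite exchange_big /= -sum_nat_const.
apply: eq_bigr => P; rewrite inE => PW.
have := card_subv_nz (val P); rewrite pt_rank => <-.
rewrite -sum1_card big_mkcond [RHS]big_mkcond /=.
apply: eq_bigr => v _; rewrite !inE.
case vP: (v <= val P)%MS; case nz: (v != 0); rewrite ?andbT ?andbF //=.
all: try (by rewrite (submx_trans vP PW)).
by case: (v <= W)%MS.
Qed.

End Count.
Section Geo.
Variables (F : finFieldType) (n : nat).
Local Notation pt := (ppoint F n).

Lemma line_proof (R Q : pt) : R != Q ->
  (\rank <<(val R + val Q)%MS>>%MS == 2%N) && (<<<<(val R + val Q)%MS>>>>%MS == <<(val R + val Q)%MS>>%MS).
Proof.
move=> neq; rewrite genmx_id eqxx andbT genmxE.
have := mxrank_sum_cap (val R) (val Q); rewrite !pt_rank.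
case r0: (\rank (val R :&: val Q)%MS) => [|k]; first by rewrite addn0 => ->.
have [X /[dup] XR XQ] : exists X : pt, (val X <= val R :&: val Q)%MS.
  by apply: exists_pt; rewrite r0.
have e1 := pt_eq (submx_trans XR (capmxSl _ _)).
have e2 := pt_eq (submx_trans XQ (capmxSr _ _)).
by move: neq; rewrite -e1 -e2 eqxx.
Qed.

Definition mkline (R Q : pt) (neq : R != Q) : pline F n :=
  @exist _ (fun A : 'M[F]_n.+1 => (\rank A == 2%N) && (<<A>>%MS == A)) _ (line_proof neq).

Lemma span_in (B G : {set pt}) :
  G \subset B -> (forall R, R \in G -> good_point B R) ->
  forall v : 'rV[F]_n.+1, forall nz : v != 0,
  (v <= \sum_(R in G) val R)%MS -> mkpt nz \in B.
Proof.
move=> GB Ggood.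
pose K (A : 'M[F]_n.+1) := forall v : 'rV[F]_n.+1, forall nz : v != 0,
  (v <= A)%MS -> mkpt nz \in B.
apply: (@big_rec _ K).
  by move=> v nz; rewrite submx0 (negPf nz).
move=> R A RG KA v nz /sub_addsmxP[[u1 u2] /= ev].
have RB : R \in B by apply: (subsetP GB).
have r_le : (u1 *m val R <= val R)%MS by apply: submxMl.
have a_le : (u2 *m A <= A)%MS by apply: submxMl.
case: (eqVneq (u2 *m A) 0) => [a0|anz].
  rewrite (@mkpt_le _ _ _ nz R) // ev a0 addr0 //.
have PaB := KA _ anz a_le.
set Pa := mkpt anz in PaB.
have aPa : (u2 *m A <= val Pa)%MS by apply: in_mkpt.
case: (eqVneq R Pa) => [eRPa|neq].
  by rewrite (@mkpt_le _ _ _ nz R) // ev; apply: addmx_sub => //; rewrite eRPa.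
have RL : pinc R (mkline neq) by rewrite /pinc /= genmxE; apply: addsmxSl.
have PaL : pinc Pa (mkline neq) by rewrite /pinc [val (mkline _)]/= genmxE; apply: addsmxSr.
have [tang|full] := Ggood R RG (mkline neq) RL.
  by have := tang Pa PaB PaL; move/eqP; rewrite eq_sym (negPf neq).
apply: full; rewrite /pinc mkpt_val /= genmxE ev.
rewrite genmxE; apply: addmx_sub; first exact: (submx_trans r_le (addsmxSl _ _)).
exact: (submx_trans aPa (addsmxSr _ _)).
Qed.

Lemma hyp_proof (A : 'M[F]_n.+1) : \rank A = n ->
  (\rank <<A>>%MS == n) && (<<<<A>>>>%MS == <<A>>%MS).
Proof. by move=> rA; rewrite genmxE rA genmx_id !eqxx. Qed.

Definition mkhyp (A : 'M[F]_n.+1) (rA : \rank A = n) : phyperplane F n :=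
  @exist _ (fun A : 'M[F]_n.+1 => (\rank A == n) && (<<A>>%MS == A)) _ (hyp_proof rA).

Lemma hyp_rank (H : phyperplane F n) : \rank (val H) = n.
Proof. by case: H => A /= /andP[/eqP]. Qed.

Lemma line_rank (L : pline F n) : \rank (val L) = 2%N.
Proof. by case: L => A /= /andP[/eqP]. Qed.

Lemma hyp_blocking (H : phyperplane F n) : blocking (hyperplane_points H).
Proof.
move=> L.
have := mxrank_sum_cap (val H) (val L); rewrite hyp_rank line_rank.
have := rank_leq_col (val H + val L)%MS => le s.
have [X XC] : exists X : pt, (val X <= val H :&: val L)%MS.
  by apply: exists_pt; lia.
exists X; first by rewrite inE /pinc (submx_trans XC (capmxSl _ _)).
exact: (submx_trans XC (capmxSr _ _)).
Qed.

End Geo.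

Theorem lemmaN2 (F : finFieldType) (p h n : nat) :
  prime p -> #|F| = (p ^ h)%N -> (2 < #|F|)%N -> (2 <= n)%N ->
  forall B : {set ppoint F n}, minimal_blocking B ->
  (exists Rs : {set ppoint F n},
      [/\ #|Rs| = (p ^ (h * (n - 1)) - p ^ (h * (n - 1) - 1) + 1)%N,
          Rs \subset B &
          forall R, R \in Rs -> good_point B R]) ->
  exists H : phyperplane F n, B = hyperplane_points H.
Proof.
move=> pp qE q3 n2 B [Bbl Bmin] [Rs [cRs RsB Rsgood]].
set W := (\sum_(R in Rs) val R)%MS.
have ptsB : forall P : ppoint F n, (val P <= W)%MS -> P \in B.
  move=> P PW; rewrite -(pt_of_nz P); apply: (span_in RsB Rsgood).
  exact: submx_trans (nz_row_sub _) PW.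
have RsT : Rs \subset [set P : ppoint F n | (val P <= W)%MS].
  by apply/subsetP => R RRs; rewrite inE; apply: (sumsmx_sup R).
have leT := subset_leq_card RsT.
have cnt := count_pts W.
have rW : (n <= \rank W)%N.
  rewrite leqNgt; apply/negP => lt.
  set y := #|[set P : ppoint F n | (val P <= W)%MS]| in leT cnt.
  set q := #|F| in qE q3 cnt.
  have h1 : (1 <= h)%N.
    by case: (posnP h) => [h0|//]; rewrite h0 expn0 in qE; rewrite qE in q3.
  have p2 : (2 <= p)%N by apply: prime_gt1.
  set N := (h * (n - 1))%N in cRs.
  have N1 : (1 <= N)%N by rewrite /N; nia.
  have eN : (p ^ N = p * p ^ (N - 1))%N by rewrite -expnS; have -> : (N - 1).+1 = N by lia.
  have qr : (q ^ \rank W <= p ^ N)%N.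
    rewrite /N expnM -qE; apply: leq_pexp2l; first by lia.
    lia.
  have x1 : (1 <= p ^ (N - 1))%N by rewrite expn_gt0; lia.
  move: cRs leT cnt qr x1; rewrite eN.
  set x := (p ^ (N - 1))%N; set Q := (q ^ \rank W)%N => cRs leT cnt qr x1.
  have m1 : (y * 2 <= y * (q - 1))%N by apply: leq_mul => //; lia.
  have m2 : (x * 2 <= p * x)%N by rewrite mulnC; apply: leq_mul.
  move: m1 m2 cRs leT cnt qr; set px := (p * x)%N; set yq := (y * (q - 1))%N.
  lia.
have [H HW] : exists H : phyperplane F n, (val H <= W)%MS.
  case: (eqVneq (\rank W) n) => e.
    by exists (mkhyp e); rewrite /= genmxE.
  have full : row_full W.
    by rewrite /row_full eqn_leq rank_leq_col /=; have := rank_leq_col W; lia.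
  have rp : \rank (pid_mx n : 'M[F]_n.+1) = n by rewrite rank_pid_mx.
  by exists (mkhyp rp); apply: submx_full.
exists H.
have sub : hyperplane_points H \subset B.
  by apply/subsetP => P; rewrite inE => PH; apply: ptsB; apply: submx_trans PH HW.
case: (eqVneq (hyperplane_points H) B) => [-> //|ne].
exfalso; apply: (Bmin _ _ (hyp_blocking H)).
by rewrite properEneq ne sub.
Qed.
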